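(* Let $A$ be a meet-semilattice and $\kappa$ a regular cardinal. Then $A$ is a $\kappa$-frame if and only if $\mathcal{BL}_\kappa A=A$.
   Context: A meet-semilattice is a poset with all finite meets. An existing join $\bigvee S$ is distributive if $a\wedge\bigvee S=\bigvee\{a\wedge s:s\in S\}$ for all $a$. A D-ideal of $A$ is a downset containing $\bigvee S$ for each subset $S$ of it with distributive join; $\mathcal{BL} A$ is the frame of D-ideals ordered by inclusion, and $A$ is identified with the sub-meet-semilattice $\{{\downarrow}a:a\in A\}$ of $\mathcal{BL} A$. A $\kappa$-join is a join of fewer than $\kappa$ elements; $A$ is a $\kappa$-frame if all $\kappa$-joins exist in $A$ and are distributive. $\mathcal{BL}_\kappa A$ is the sub-$\kappa$-frame of $\mathcal{BL} A$ generated by $A$ (the smallest subset containing $A$ closed under finite meets and $\kappa$-joins computed in $\mathcal{BL} A$). *)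

(* Defs.v *)
(* A meet-semilattice (with all finite meets, hence a top)
   is a [tMeetSemilatticeType d]. A cardinal kappa is represented by a type K
   (of cardinality kappa). *)
From HB Require Import structures.
From mathcomp Require Import all_boot all_order.
Set Implicit Arguments. Unset Strict Implicit. Unset Printing Implicit Defensive.
Import Order.TTheory.
Local Open Scope order_scope.

Definition card_lt (X K : Type) : Prop :=
  (exists f : X -> K, injective f) /\ ~ (exists g : K -> X, injective g).

(* K is (the underlying set of) a regular cardinal: infinite, and not a union
   of fewer than |K| subsets each of size < |K|. *)
Definition regular_card (K : Type) : Prop :=
  (exists f : nat -> K, injective f) /\
  forall (I : Type) (X : I -> K -> Prop),
    card_lt I K -> (forall i, card_lt {k : K | X i k} K) ->
    exists k : K, forall i, ~ X i k.

Section BL.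
Context {d : Order.disp_t} (A : tMeetSemilatticeType d).

Definition is_join (S : A -> Prop) (s : A) : Prop :=
  (forall x, S x -> x <= s) /\ (forall u, (forall x, S x -> x <= u) -> s <= u).

Definition dist_join (S : A -> Prop) (s : A) : Prop :=
  is_join S s /\
  forall a : A, is_join (fun y => exists2 x, S x & y = a `&` x) (a `&` s).

Definition Dideal (I : A -> Prop) : Prop :=
  (forall x y : A, y <= x -> I x -> I y) /\
  (forall (S : A -> Prop) (s : A), (forall x, S x -> I x) -> dist_join S s -> I s).

Definition principal (a : A) : A -> Prop := fun x => x <= a.

(* join in the frame BL A of a family F of D-ideals: the least D-ideal
   containing all members of F *)
Definition BLjoin (F : (A -> Prop) -> Prop) : A -> Prop :=
  fun x => forall J, Dideal J -> (forall I y, F I -> I y -> J y) -> J x.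

Definition kappa_frame (K : Type) : Prop :=
  forall S : A -> Prop, card_lt {x : A | S x} K -> exists s, dist_join S s.

(* a family of subsets of A containing A (as principal downsets), closed under
   finite meets (intersections, including the empty one) and kappa-joins
   computed in BL A *)
Definition BLk_closed (K : Type) (P : (A -> Prop) -> Prop) : Prop :=
  [/\ forall a, P (principal a),
      P (fun _ => True),
      forall I J, P I -> P J -> P (fun x => I x /\ J x)
    & forall F, (forall I, F I -> P I) -> card_lt {I : A -> Prop | F I} K ->
        P (BLjoin F)].

(* membership in BL_kappa A: the sub-kappa-frame of BL A generated by A *)
Definition BLk (K : Type) (I : A -> Prop) : Prop :=
  Dideal I /\ forall P, BLk_closed K P -> P I.

End BL.
Arguments kappa_frame {d} A K.
Arguments BLk {d} A K I.

(* Main.v *)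
Require Import Defs.
From HB Require Import structures.
From mathcomp Require Import all_boot all_order.
From Stdlib Require Import FunctionalExtensionality PropExtensionality ClassicalEpsilon ProofIrrelevance.
Import Order.TTheory.
Local Open Scope order_scope.

Lemma card_lt_inj (X Y K : Type) :
  (exists f : Y -> X, injective f) -> card_lt X K -> card_lt Y K.
Proof.
move=> [f finj] [[g ginj] nK]; split.
  by exists (g \o f) => x y /ginj /finj.
by move=> [h hinj]; apply: nK; exists (f \o h) => x y /finj /hinj.
Qed.

Section Aux.
Context {d : Order.disp_t} (A : tMeetSemilatticeType d).

Lemma principal_Dideal (a : A) : Dideal (principal a).
Proof.
split.
- move=> x y yx xa; exact: le_trans yx xa.
- move=> S s HS [[_ Hl] _]; apply: Hl => x /HS; done.
Qed.

Lemma meet_mono (a x y : A) : x <= y -> a `&` x <= a `&` y.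
Proof. by move=> xy; apply: leI2. Qed.

Lemma meet_Dideal (a u : A) : Dideal (fun y => a `&` y <= u).
Proof.
split.
- move=> x y yx H; apply: le_trans H; exact: meet_mono.
- move=> S s HS [_ Hd]; have [_ L] := Hd a.
  apply: L => y [x Sx ->]; exact: HS.
Qed.

Lemma BLjoin_Dideal (F : (A -> Prop) -> Prop) : Dideal (BLjoin F).
Proof.
split.
- move=> x y yx Hx J DJ HJ; exact: (proj1 DJ) x y yx (Hx J DJ HJ).
- move=> S s HS Hd J DJ HJ.
  exact: (proj2 DJ) S s (fun x Sx => HS x Sx J DJ HJ) Hd.
Qed.

Lemma ext_principal (I : A -> Prop) a :
  (forall x, I x <-> principal a x) -> I = principal a.
Proof.
move=> H; apply: functional_extensionality => x; apply: propositional_extensionality; exact: H.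
Qed.
End Aux.
Arguments card_lt_inj {X Y K}.
Arguments principal_Dideal {d A}.
Arguments meet_mono {d A}.
Arguments meet_Dideal {d A}.
Arguments BLjoin_Dideal {d A}.
Arguments ext_principal {d A I a}.

Theorem theorem4p2 (d : Order.disp_t) (A : tMeetSemilatticeType d) (K : Type) :
  regular_card K ->
  (kappa_frame A K <->
   (forall I : A -> Prop,
      BLk A K I <-> exists a : A, forall x : A, I x <-> principal a x)).
Proof.
move=> _; split.
- move=> KF I; split.
  + move=> [DI HP].
    pose P := fun J : A -> Prop => exists a, forall x, J x <-> principal a x.
    apply: (HP P); split.
    * by move=> a; exists a.
    * by exists \top => x; split=> // _; exact: lex1.
    * move=> I1 J1 [a Ha] [b Hb]; exists (a `&` b) => x; rewrite /principal lexI.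
      split.
        by move=> [/Ha h1 /Hb h2]; apply/andP.
      by move=> /andP [h1 h2]; split; [apply/Ha|apply/Hb].
    * move=> F HF Hc.
      pose S := fun x : A => F (principal x).
      have Hinj : exists f : {x | S x} -> {J | F J}, injective f.
        exists (fun p : {x | S x} => exist F (principal (sval p)) (svalP p)).
        move=> [x1 h1] [x2 h2] /(congr1 sval) /= E.
        have E1 := equal_f E x1; have E2 := equal_f E x2.
        rewrite /principal lexx in E1 E2.
        have ex : x1 = x2.
          apply: le_anti; apply/andP; split.
            by rewrite -E1.
          by rewrite E2.
        subst x2; congr exist; apply: proof_irrelevance.
      have [s Hs] := KF S (card_lt_inj Hinj Hc).
      exists s => x; split.
      -- move=> Hx; apply: Hx; first exact: principal_Dideal.
         move=> J y FJ Jy; have [a Ha] := HF J FJ.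
         have Ea := ext_principal Ha; subst J.
         exact: le_trans Jy ((proj1 (proj1 Hs)) a FJ).
      -- move=> xs J DJ HJ.
         exact: (proj1 DJ) s x xs ((proj2 DJ) S s (fun a Sa => HJ (principal a) a Sa (lexx a)) Hs).
  + move=> [a Ha]; have E := ext_principal Ha; subst I.
    split; first exact: principal_Dideal.
    by move=> P [H _ _ _]; exact: H.
- move=> H S HS.
  pose F := fun I : A -> Prop => exists x, S x /\ I = principal x.
  have Hinj : exists f : {I | F I} -> {x | S x}, injective f.
    pose c := fun p : {I | F I} => constructive_indefinite_description
                       (fun x => S x /\ sval p = principal x) (svalP p).
    exists (fun p => exist S (sval (c p)) (proj1 (svalP (c p)))).
    move=> p1 p2 /(congr1 sval) /= Ex.
    have E : sval p1 = sval p2.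
      by rewrite (proj2 (svalP (c p1))) (proj2 (svalP (c p2))) Ex.
    move: p1 p2 E {Ex} => [I1 h1] [I2 h2] /= E; subst I2.
    by rewrite (proof_irrelevance _ h1 h2).
  have BJ : BLk A K (BLjoin F).
    split; first exact: BLjoin_Dideal.
    move=> P [H1 _ _ H4]; apply: H4 => //.
    - by move=> I [x [_ ->]]; exact: H1.
    - exact: card_lt_inj Hinj HS.
  have [s Hs] := (proj1 (H _) BJ).
  have Bs : BLjoin F s by apply/Hs; exact: lexx.
  have ub : forall x, S x -> x <= s.
    move=> x Sx; have : BLjoin F x.
      move=> J DJ HJ; apply: (HJ (principal x) x); last exact: lexx.
      by exists x; split.
    by move/Hs.
  exists s; split; [split|].
  + exact: ub.
  + move=> u Hu; apply: (Bs (principal u) (principal_Dideal u)).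
    move=> I y [x [Sx ->]] yx; exact: le_trans yx (Hu x Sx).
  + move=> a; split.
    * move=> y [x Sx ->]; apply: meet_mono; exact: ub.
    * move=> u Hu; apply: (Bs _ (meet_Dideal a u)).
      move=> I y [x [Sx ->]] yx.
      apply: le_trans (Hu (a `&` x) (ex_intro2 _ _ x Sx erefl)).
      exact: meet_mono.
Qed.
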